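(* Let $G=(V,E)$ be a finite graph with boundary $B\subseteq V$, $|B|\ge2$, with maximum degree $\Delta\ge3$, and let $t\ge1$ be an integer such that the boundary diameter satisfies $D_B\ge 2t+2$ (in particular $D_B\ge4$). Let $q=\Delta-1$. Then $$\sigma_2(G,B)\le\frac{(q+1)(q^{t+1}-q^t+1)}{q^{t+1}}=q-\frac{q^t-q-1}{q^{t+1}}.$$ Moreover, the right-hand side is monotone decreasing in $t$.
   Context: A boundary is $B\subseteq V$ with $|B|\ge2$. The boundary diameter $D_B$ is $\max_{x,y\in B}\operatorname{dist}_G(x,y)$, with $\operatorname{dist}_G$ the graph distance in $G$. Rayleigh quotient: $R(f)=\frac{\sum_{\{x,y\}\in E}(f(x)-f(y))^2}{\sum_{x\in B}f(x)^2}$ ($+\infty$ if $f|_B=0$); $\sigma_2(G,B)=\min_{W\subseteq\mathbb{R}^V,\dim W=2}\max_{0\ne f\in W}R(f)$. *)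

(* Defs.v *)
From HB Require Import structures.
From mathcomp Require Import all_boot all_order all_algebra.
From mathcomp Require Import boolp classical_sets reals constructive_ereal ereal.
Set Implicit Arguments. Unset Strict Implicit. Unset Printing Implicit Defensive.
Import Order.TTheory GRing.Theory Num.Theory.
Local Open Scope ring_scope.

(* A finite simple graph: vertex set V (a finType), adjacency adj, assumed
   symmetric and irreflexive in the main theorem. *)

Section Graph.
Variables (V : finType) (adj : rel V).

Definition deg (v : V) : nat := #|[set w | adj v w]|.
Definition maxdeg : nat := (\max_(v : V) deg v)%N.

(* dist_G(x,y) >= d : every walk from x to y has length >= d
   (dist_G is the least length of a walk, +infinity if none). *)
Definition dist_ge (x y : V) (d : nat) : Prop :=
  forall p : seq V, path adj x p -> last x p = y -> (d <= size p)%N.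

Definition bdiam_ge (B : {set V}) (d : nat) : Prop :=
  exists x y, [/\ x \in B, y \in B & dist_ge x y d].

Variable R : realType.

(* sum over edges {x,y} of (f x - f y)^2; each unordered edge is counted
   twice in the ordered double sum, hence the factor 1/2 *)
Definition energy (f : {ffun V -> R^o}) : R :=
  2^-1 * \sum_(x : V) \sum_(y : V | adj x y) (f x - f y) ^+ 2.

Definition bnorm (B : {set V}) (f : {ffun V -> R^o}) : R :=
  \sum_(x in B) f x ^+ 2.

Definition rayleigh (B : {set V}) (f : {ffun V -> R^o}) : \bar R :=
  if bnorm B f == 0 then +oo%E else (energy f / bnorm B f)%:E.

Definition sigma2 (B : {set V}) : \bar R :=
  ereal_inf [set ereal_sup [set rayleigh B f | f in
                   [set f : {ffun V -> R^o} | (f \in W) /\ f != 0]]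
            | W in [set W : {vspace {ffun V -> R^o}} | \dim W = 2%N]].

End Graph.

Definition sigma_bound {R : realType} (q : R) (t : nat) : R :=
  (q + 1) * (q ^+ t.+1 - q ^+ t + 1) / q ^+ t.+1.

(* Main.v *)
Require Import Defs.
From HB Require Import structures.
From mathcomp Require Import all_boot all_order all_algebra.
From mathcomp Require Import boolp classical_sets reals constructive_ereal ereal.
From mathcomp Require Import ring lra zify.
Import Order.TTheory GRing.Theory Num.Theory.
Local Open Scope ring_scope.
Set Implicit Arguments. Unset Strict Implicit. Unset Printing Implicit Defensive.
Section Comb.
Variables (V : finType) (adj : rel V) (adj_sym : symmetric adj).

Fixpoint ball (x : V) (k : nat) : {set V} :=
  if k is k'.+1 then ball x k' :|: [set w | [exists u in ball x k', adj u w]]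
  else [set x].

Lemma ball_S x k : ball x k \subset ball x k.+1.
Proof. by rewrite /=; apply: finset.subsetUl. Qed.

Lemma ball_mono x k m : (k <= m)%N -> ball x k \subset ball x m.
Proof.
elim: m => [|m IH]; first by rewrite leqn0 => /eqP->.
rewrite leq_eqVlt => /orP[/eqP->//|]; rewrite ltnS => /IH h.
exact: fintype.subset_trans h (ball_S x m).
Qed.

Lemma ball_adj x k u w : u \in ball x k -> adj u w -> w \in ball x k.+1.
Proof.
move=> hu huw /=; apply/setUP; right; rewrite inE; apply/existsP; exists u.
by rewrite hu huw.
Qed.

Lemma ball_path x k v : v \in ball x k ->
  exists p, [/\ path adj x p, last x p = v & (size p <= k)%N].
Proof.
elim: k v => [|k IH] v /=.
  by rewrite inE => /eqP->; exists [::].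
case/setUP.
  by move=> /IH [p [h1 h2 h3]]; exists p; split => //; apply: leqW.
rewrite inE => /existsP [u /andP [/IH [p [h1 h2 h3]] huv]].
exists (rcons p v); split.
- by rewrite rcons_path h1 h2 huv.
- by rewrite last_rcons.
- by rewrite size_rcons.
Qed.

Lemma ball_tri x y a b v : v \in ball x a -> v \in ball y b -> y \in ball x (a + b).
Proof.
elim: b a v => [|b IH] a v hv /=.
  by rewrite inE => /eqP <-; rewrite addn0.
case/setUP.
  move=> /(IH a v hv) h; rewrite addnS.
  exact: (fintype.subsetP (ball_S x _)).
rewrite inE => /existsP [u /andP [hu huv]].
have hu' : u \in ball x a.+1 by apply: ball_adj hv _; rewrite adj_sym.
by have := IH a.+1 u hu' hu; rewrite addSnnS.
Qed.

Variable t : nat.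

Definition lev x v := find (fun k => v \in ball x k) (iota 0 t.+1).

Lemma lev_le x v : (lev x v <= t.+1)%N.
Proof. by have := find_size (fun k => v \in ball x k) (iota 0 t.+1); rewrite size_iota. Qed.

Lemma lev_ball x v : (lev x v <= t)%N -> v \in ball x (lev x v).
Proof.
move=> h.
have hh : has (fun k => v \in ball x k) (iota 0 t.+1).
  by rewrite has_find size_iota ltnS.
have := nth_find 0%N hh; rewrite nth_iota ?add0n //.
Qed.

Lemma lev_min x v k : (k <= t)%N -> v \in ball x k -> (lev x v <= k)%N.
Proof.
move=> hk hv; rewrite leqNgt; apply/negP => hlt.
by have := before_find 0%N hlt; rewrite nth_iota ?add0n ?hv // ltnS.
Qed.

Lemma lev_root x : lev x x = 0%N.
Proof. by apply/eqP; rewrite -leqn0; apply: lev_min => //; rewrite /= inE. Qed.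

Lemma lev0 x v : lev x v = 0%N -> v = x.
Proof. by move=> h; have := lev_ball (x:=x) (v:=v); rewrite h /= inE => /(_ isT) /eqP. Qed.

Lemma lev_adj x u w : adj u w -> (lev x w <= (lev x u).+1)%N.
Proof.
move=> huw; have := lev_le x u; rewrite leq_eqVlt => /orP[/eqP->|].
  by have := lev_le x w => /leqW.
rewrite ltnS => hu.
have hw := ball_adj (lev_ball hu) huw.
have [hlt|] := leqP (lev x u).+1 t; first exact: lev_min.
move=> htu; have : lev x u = t by apply/eqP; rewrite eqn_leq hu -ltnS htu.
by move=> ->; apply: lev_le.
Qed.

Lemma lev_back x w : (1 <= lev x w <= t)%N ->
  exists u, adj u w /\ lev x u = (lev x w).-1.
Proof.
move=> /andP [h1 h2].
have hw := lev_ball h2.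
move: hw; case E: (lev x w) h1 h2 => [|d] // _ hd /= /setUP [hb|].
  by have := lev_min (leq_trans (leqnSn d) hd) hb; rewrite E ltnn.
rewrite inE => /existsP [u /andP [hu huw]].
exists u; split => //.
have h1 := lev_min (leq_trans (leqnSn d) hd) hu.
have h2 := lev_adj x huw; rewrite E in h2.
by apply/eqP; rewrite eqn_leq h1 -ltnS h2.
Qed.

End Comb.
Section Count.
Variables (V : finType) (adj : rel V) (adj_sym : symmetric adj) (t : nat).
Variables (Dm : nat) (hdeg : forall u : V, (\sum_(w : V) adj u w <= Dm.+1)%N).
Variable x : V.
Local Notation lev := (lev adj t x).

Definition fwd u := (\sum_(w : V) (adj u w && (lev w == (lev u).+1)))%N.
Definition back u := (\sum_(w : V) (adj u w && (lev w == (lev u).-1)))%N.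
Definition Fl d := (\sum_(u | lev u == d) fwd u)%N.

Lemma fwd_back u : (1 <= lev u)%N -> (fwd u + back u <= Dm.+1)%N.
Proof.
move=> h; apply: leq_trans (hdeg u); rewrite /fwd /back -big_split /=.
apply: leq_sum => w _; case: (adj u w) => //=.
case: (lev w == _) /eqP => e1; case: (lev w == _) /eqP => e2 //; lia.
Qed.

Lemma back_ge1 u : (1 <= lev u <= t)%N -> (1 <= back u)%N.
Proof.
move=> /lev_back [w [hw e]].
rewrite /back (bigD1 w) //= -/(lev w) e eqxx (adj_sym u w) hw /=.
by rewrite leq_addr.
Qed.

Lemma fwd_le u : (1 <= lev u <= t)%N -> (fwd u <= Dm * back u)%N.
Proof.
move=> h; have h1 := back_ge1 h; have h2 := fwd_back (proj1 (andP h)).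
have : (fwd u <= Dm)%N by lia.
move=> h3; apply: leq_trans h3 _; exact: leq_pmulr.
Qed.

Lemma sum_filter2 (P : pred V) (b : V -> V -> bool) :
  (\sum_(u | P u) \sum_(w : V) (b u w : nat) = \sum_(u : V) \sum_(w : V) ((P u && b u w) : nat))%N.
Proof.
rewrite big_mkcond; apply: eq_bigr => u _; case: (P u) => //=.
by rewrite big1.
Qed.

Lemma back_sum d : (1 <= d)%N -> (\sum_(u | lev u == d) back u = Fl d.-1)%N.
Proof.
move=> hd; rewrite /back /Fl /fwd sum_filter2 [RHS]sum_filter2 [RHS]exchange_big /=.
apply: eq_bigr => w _; apply: eq_bigr => u _.
rewrite (adj_sym w u); case: (adj u w); rewrite ?andbF //=.
congr nat_of_bool.
apply/idP/idP => /andP[/eqP e1 /eqP e2]; apply/andP; split; apply/eqP; lia.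
Qed.

Lemma Fl_step d : (1 <= d <= t)%N -> (Fl d <= Dm * Fl d.-1)%N.
Proof.
move=> /andP [h1 h2].
rewrite -back_sum // big_distrr /= /Fl.
by apply: leq_sum => u /eqP hu; apply: fwd_le; rewrite hu h1 h2.
Qed.

Lemma Fl0 : (Fl 0 <= Dm.+1)%N.
Proof.
rewrite /Fl (eq_bigl (fun u => u == x)); last first.
  move=> u; apply/eqP/eqP => [/lev0 //|->]; exact: lev_root.
rewrite big_pred1_eq; apply: leq_trans (hdeg x).
by rewrite /fwd; apply: leq_sum => w _; case: (adj x w); case: (_ == _).
Qed.

Lemma Fl_bound d : (d <= t)%N -> (Fl d <= Dm.+1 * Dm ^ d)%N.
Proof.
elim: d => [|d IH] hd; first by rewrite expn0 muln1 Fl0.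
have := Fl_step (d:=d.+1); rewrite hd /= => /(_ isT) h.
apply: leq_trans h _; rewrite expnS mulnCA leq_mul2l IH ?orbT //.
exact: ltnW.
Qed.

End Count.
Section RealPart.
Variables (V : finType) (adj : rel V) (adj_sym : symmetric adj) (t : nat).
Variables (R : realType) (q : R).
Local Notation r := (q^-1).

Definition aa (d : nat) : R := if (d <= t)%N then r ^+ d else 0.
Definition cc (d : nat) : R := (aa d - aa d.+1) ^+ 2.
Definition phi (x : V) : {ffun V -> R^o} := [ffun v => aa (lev adj t x v)].

Variable x : V.
Local Notation lev := (lev adj t x).
Local Notation fwd := (fwd adj t x).

Definition gg (u w : V) : R := cc (lev u) * (lev w == (lev u).+1)%:R.

Lemma phi_pt u w : adj u w -> (phi x u - phi x w) ^+ 2 = gg u w + gg w u.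
Proof.
move=> huw; have h1 := lev_adj t x huw.
have h2 : (lev u <= (lev w).+1)%N by apply: lev_adj; rewrite adj_sym.
rewrite /gg !ffunE.
have : lev w = lev u \/ lev w = (lev u).+1 \/ lev u = (lev w).+1 by lia.
case=> [->|[->|->]].
- by rewrite subrr expr0n /= ltn_eqF // mulr0 addr0.
- by rewrite eqxx mulr1 (ltn_eqF (leqW (ltnSn _))) mulr0 addr0.
- by rewrite eqxx mulr1 (ltn_eqF (leqW (ltnSn _))) mulr0 add0r /cc -opprB sqrrN.
Qed.

Lemma sym_sum (G : V -> V -> R) :
  \sum_(u : V) \sum_(w | adj u w) G w u = \sum_(u : V) \sum_(w | adj u w) G u w.
Proof.
under eq_bigr => u _ do rewrite big_mkcond.
rewrite exchange_big /=.
apply: eq_bigr => w _; rewrite [RHS]big_mkcond; apply: eq_bigr => u _.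
by rewrite adj_sym.
Qed.

Lemma energy_phi : energy adj (phi x) = \sum_(u : V) cc (lev u) * (fwd u)%:R.
Proof.
rewrite /energy.
transitivity (2^-1 * \sum_(u : V) \sum_(w | adj u w) (gg u w + gg w u)).
  by congr (_ * _); apply: eq_bigr => u _; apply: eq_bigr => w; apply: phi_pt.
under eq_bigr => u _ do rewrite big_split /=.
rewrite big_split /= sym_sum -mulr2n sym_sum.
have -> : forall y : R, 2^-1 * (y *+ 2) = y by move=> y; rewrite -[y *+ 2]mulr_natr mulrC mulfK //; apply/eqP => h; lra.
apply: eq_bigr => u _; rewrite /fwd natr_sum mulr_sumr big_mkcond /=.
apply: eq_bigr => w _; rewrite /gg; case: (adj u w) => //=.
by rewrite mulr0.
Qed.

Lemma group_lev (F : V -> R) :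
  \sum_(u : V) F u = \sum_(d < t.+2) \sum_(u | lev u == d) F u.
Proof.
rewrite (partition_big (fun u => (inord (lev u) : 'I_t.+2)) xpredT) //=.
apply: eq_bigr => j _; apply: eq_bigl => u.
by rewrite -val_eqE /= inordK // ltnS lev_le.
Qed.

Lemma energy_levels :
  energy adj (phi x) = \sum_(d < t.+2) cc d * (Fl adj t x d)%:R.
Proof.
rewrite energy_phi group_lev; apply: eq_bigr => d _.
rewrite /Fl natr_sum mulr_sumr; apply: eq_bigr => u /eqP ->.
by [].
Qed.

End RealPart.
Section Bound.
Variables (V : finType) (adj : rel V) (adj_sym : symmetric adj) (t : nat).
Variables (R : realType) (Dm : nat) (hDm : (1 <= Dm)%N).
Variable (hdeg : forall u : V, (\sum_(w : V) adj u w <= Dm.+1)%N).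
Local Notation q := (Dm%:R : R).
Local Notation r := (q^-1).

Lemma q_neq0 : q != 0.
Proof. by rewrite pnatr_eq0 -lt0n. Qed.

Lemma rq n : r ^+ n * q ^+ n = 1.
Proof. by rewrite -exprMn mulVf ?expr1n // q_neq0. Qed.

Lemma geo n : (n <= t)%N ->
  \sum_(d < n) cc t q d * q ^+ d = (1 - r) * (1 - r ^+ n).
Proof.
elim: n => [|n IH] hn; first by rewrite big_ord0 expr0 subrr mulr0.
rewrite big_ord_recr /= IH ?(ltnW hn) //.
rewrite /cc /aa ifT ?(ltnW hn) // ifT //.
have h := rq n.
have -> : (r ^+ n - r ^+ n.+1) ^+ 2 * q ^+ n = (1 - r) ^+ 2 * r ^+ n * (r ^+ n * q ^+ n).
  by rewrite [r ^+ n.+1]exprS; move: (r ^+ n) (q ^+ n) r => s Q r'; ring.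
rewrite h [r ^+ n.+1]exprS; move: (r ^+ n) r => s r'; ring.
Qed.

Lemma closed_form :
  \sum_(d < t.+1) cc t q d * (Dm.+1 * Dm ^ d)%:R = (q + 1) * (1 - r + r ^+ t.+1).
Proof.
have -> : \sum_(d < t.+1) cc t q d * (Dm.+1 * Dm ^ d)%:R =
          (q + 1) * \sum_(d < t.+1) cc t q d * q ^+ d.
  rewrite mulr_sumr; apply: eq_bigr => d _.
  by rewrite natrM natrX -natr1; move: (cc t q d) (q ^+ d) => a b; ring.
congr (_ * _); rewrite big_ord_recr /= geo //.
rewrite /cc /aa leqnn ifF; last by apply/negbTE; rewrite -ltnNge.
have h := rq t.
have -> : (r ^+ t - 0) ^+ 2 * q ^+ t = r ^+ t * (r ^+ t * q ^+ t).
  by move: (r ^+ t) (q ^+ t) => s Q; ring.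
rewrite h [r ^+ t.+1]exprS; move: (r ^+ t) r => s r'; ring.
Qed.

Lemma energy_bound (x : V) :
  energy adj (phi adj t q x) <= (q + 1) * (1 - r + r ^+ t.+1).
Proof.
rewrite (energy_levels adj_sym) big_ord_recr /=.
have -> : cc t q t.+1 = 0.
  rewrite /cc /aa ifF; last by apply/negbTE; rewrite -ltnNge.
  by rewrite ifF ?subrr ?expr0n //; apply/negbTE; rewrite -ltnNge; apply: leqW.
rewrite mul0r addr0 -closed_form; apply: ler_sum => d _.
apply: ler_wpM2l; first exact: sqr_ge0.
rewrite ler_nat; apply: (Fl_bound adj_sym hdeg); rewrite -ltnS; exact: ltn_ord.
Qed.

End Bound.
Section Final.
Variables (V : finType) (adj : rel V) (adj_sym : symmetric adj) (t : nat).
Variables (R : realType) (q : R).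
Variables (x y : V).
Hypothesis hfar : forall k, (k <= t + t.+1)%N -> y \in ball adj x k -> False.

Local Notation fx := (phi adj t q x).
Local Notation fy := (phi adj t q y).

Lemma phi_supp z v : phi adj t q z v != 0 -> v \in ball adj z t.
Proof.
rewrite ffunE /aa; case: ifP => h; last by rewrite eqxx.
move=> _; exact: (fintype.subsetP (ball_mono _ _ h)) _ (lev_ball h).
Qed.

Lemma phi_root z : phi adj t q z z = 1.
Proof. by rewrite ffunE lev_root /aa /= expr0. Qed.

Lemma far2 v a b : (a + b <= t + t.+1)%N -> v \in ball adj x a -> v \in ball adj y b -> False.
Proof. by move=> hab ha hb; apply: (hfar hab); apply: ball_tri ha hb. Qed.

Lemma phi_xy : fx y = 0.
Proof.
apply/eqP; apply/negP => /negP /phi_supp h.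
apply: (@far2 y t 0) => //; first lia.
by rewrite /= inE.
Qed.

Lemma phi_yx : fy x = 0.
Proof.
apply/eqP; apply/negP => /negP /phi_supp h.
apply: (@far2 x 0 t) => //; first lia.
by rewrite /= inE.
Qed.

Lemma phi_disj v : fx v * fy v = 0.
Proof.
have [h1|/phi_supp h1] := eqVneq (fx v) 0; first by rewrite h1 mul0r.
have [h2|/phi_supp h2] := eqVneq (fy v) 0; first by rewrite h2 mulr0.
by exfalso; apply: (@far2 v t t) => //; lia.
Qed.

Lemma cross_aux u w : adj u w -> fx u != 0 -> fy u = 0 /\ fy w = 0.
Proof.
move=> huw /phi_supp hu; have hw := ball_adj hu huw.
split; apply/eqP; apply/negP => /negP /phi_supp h.
- by apply: (@far2 u t t) => //; lia.
- by apply: (@far2 w t.+1 t) => //; lia.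
Qed.

Lemma phi_cross u w : adj u w -> (fx u - fx w) * (fy u - fy w) = 0.
Proof.
move=> huw.
have [e|ne] := eqVneq (fx u) (fx w); first by rewrite e subrr mul0r.
have [h|h] := eqVneq (fx u) 0.
  have hw : fx w != 0 by rewrite -h eq_sym.
  have huw' : adj w u by rewrite adj_sym.
  have [-> ->] := cross_aux huw' hw.
  by rewrite subrr mulr0.
have [-> ->] := cross_aux huw h.
by rewrite subrr mulr0.
Qed.

End Final.
Section Comb2.
Variables (V : finType) (adj : rel V) (adj_sym : symmetric adj) (t : nat).
Variables (R : realType) (q : R).
Variables (x y : V).
Hypothesis hfar : forall k, (k <= t + t.+1)%N -> y \in ball adj x k -> False.
Variable B : {set V}.

Local Notation fx := (phi adj t q x).
Local Notation fy := (phi adj t q y).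

Lemma ffun_comb (f g : {ffun V -> R^o}) (a b : R) v :
  (a *: f + b *: g) v = a * f v + b * g v.
Proof. by rewrite !ffunE. Qed.

Lemma comb_energy (a b : R) :
  energy adj (a *: fx + b *: fy) = a ^+ 2 * energy adj fx + b ^+ 2 * energy adj fy.
Proof.
rewrite /energy [a ^+ 2 * _]mulrCA [b ^+ 2 * _]mulrCA -mulrDr; congr (_ * _).
rewrite !mulr_sumr -big_split; apply: eq_bigr => u _.
rewrite !mulr_sumr -big_split; apply: eq_bigr => w huw.
have h := phi_cross adj_sym q hfar huw.
move: h; set F := fx; set G := fy => h.
rewrite !ffun_comb.
transitivity (a ^+ 2 * (F u - F w) ^+ 2 + b ^+ 2 * (G u - G w) ^+ 2
   + 2 * a * b * ((F u - F w) * (G u - G w))).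
  by move: (F u) (F w) (G u) (G w) => X1 X2 Y1 Y2; ring.
by rewrite h mulr0 addr0.
Qed.

Lemma comb_bnorm (a b : R) :
  bnorm B (a *: fx + b *: fy) = a ^+ 2 * bnorm B fx + b ^+ 2 * bnorm B fy.
Proof.
rewrite /bnorm !mulr_sumr -big_split; apply: eq_bigr => v _.
have h := phi_disj adj_sym q hfar v.
move: h; set F := fx; set G := fy => h.
rewrite !ffun_comb.
transitivity (a ^+ 2 * F v ^+ 2 + b ^+ 2 * G v ^+ 2 + 2 * a * b * (F v * G v)).
  by move: (F v) (G v) => X Y; ring.
by rewrite h mulr0 addr0.
Qed.

Lemma bnorm_ge1 z : z \in B -> 1 <= bnorm B (phi adj t q z).
Proof.
move=> hz; rewrite /bnorm (bigD1 z) //= phi_root expr1n lerDl.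
by apply: sumr_ge0 => v _; apply: sqr_ge0.
Qed.

End Comb2.
Lemma sb_eq (R : realType) (q : R) t : q != 0 ->
  sigma_bound q t = (q + 1) * (1 - q^-1 + q^-1 ^+ t.+1).
Proof.
move=> hq; rewrite /sigma_bound exprVn exprSr.
have hQ : q ^+ t != 0 by rewrite expf_neq0.
move: (q ^+ t) hQ => Q hQ; field.
by rewrite hq hQ.
Qed.

Lemma sb_id (R : realType) (q : R) t : q != 0 ->
  sigma_bound q t = q - (q ^+ t - q - 1) / q ^+ t.+1.
Proof.
move=> hq; rewrite /sigma_bound exprSr.
have hQ : q ^+ t != 0 by rewrite expf_neq0.
move: (q ^+ t) hQ => Q hQ; field.
by rewrite hq hQ.
Qed.

Lemma ffunZ' (V : finType) (R : realType) (f : {ffun V -> R^o}) (k : R) v :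
  (k *: f) v = k * f v.
Proof. by rewrite ffunE. Qed.

Theorem mainTheorem9 (R : realType) (V : finType) (adj : rel V)
  (adj_sym : symmetric adj) (adj_irr : irreflexive adj)
  (B : {set V}) (hB : (2 <= #|B|)%N)
  (hDelta : (3 <= maxdeg adj)%N)
  (t : nat) (ht : (1 <= t)%N)
  (hD : bdiam_ge adj B (2 * t + 2)) :
  let q : R := ((maxdeg adj).-1)%:R in
  [/\ (sigma2 adj R B <= (sigma_bound q t)%:E)%E,
      sigma_bound q t = q - (q ^+ t - q - 1) / q ^+ t.+1
    & forall t1 t2 : nat, (1 <= t1)%N -> (t1 <= t2)%N ->
        sigma_bound q t2 <= sigma_bound q t1].
Proof.
move=> q.
set Dm := (maxdeg adj).-1.
have hm : Dm.+1 = maxdeg adj by rewrite /Dm prednK //; lia.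
have hDm : (1 <= Dm)%N by rewrite /Dm; lia.
have hq0 : q != 0 by rewrite pnatr_eq0 -lt0n.
have hq1 : 1 <= q by rewrite ler1n.
have hqp : 0 < q by lra.
have hr0 : 0 <= q^-1 by rewrite invr_ge0; lra.
have hr1 : q^-1 <= 1 by rewrite invf_le1.
split; last first.
- move=> t1 t2 h1 h12; rewrite !(sb_eq _ hq0).
  apply: ler_wpM2l; first lra.
  rewrite lerD2l; apply: ler_wiXn2l => //.
- exact: sb_id.
have hdeg : forall u : V, (\sum_(w : V) adj u w <= Dm.+1)%N.
  move=> u; rewrite hm.
  have -> : (\sum_(w : V) adj u w)%N = deg adj u.
    rewrite /deg -sum1dep_card [RHS]big_mkcond /=; apply: eq_bigr => w _.
    by case: (adj u w).
  by rewrite /maxdeg; apply: leq_bigmax.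
case: hD => x [y [hx hy hxy]].
have hfar : forall k, (k <= t + t.+1)%N -> y \in ball adj x k -> False.
  move=> k hk /ball_path [p [hp hl hs]]; have := hxy p hp hl; lia.
rewrite (sb_eq _ hq0).
set C := (q + 1) * (1 - q^-1 + q^-1 ^+ t.+1).
have hC : 0 <= C.
  rewrite /C; apply: mulr_ge0; first lra.
  have := exprn_ge0 t.+1 hr0; lra.
have Ex : energy adj (phi adj t q x) <= C := energy_bound adj_sym t R hDm hdeg x.
have Ey : energy adj (phi adj t q y) <= C := energy_bound adj_sym t R hDm hdeg y.
set fx := phi adj t q x.
set fy := phi adj t q y.
have Nx := bnorm_ge1 adj t q hx.
have Ny := bnorm_ge1 adj t q hy.
set W := (<<[:: fx; fy]>>)%VS.
have fx_x : fx x = 1 by apply: phi_root.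
have fy_y : fy y = 1 by apply: phi_root.
have fy_x : fy x = 0 by apply: (phi_yx adj_sym q hfar).
have hW : \dim W = 2%N.
  apply/eqP; rewrite /W.
  have : free [:: fx; fy].
    rewrite free_cons span_seq1 free_cons span_nil memv0 nil_free andbT.
    apply/andP; split.
      apply/negP => /vlineP [k hk].
      have := congr1 (fun f : {ffun V -> R^o} => f x) hk.
      by rewrite /= ffunZ' fx_x fy_x mulr0 => /eqP; rewrite oner_eq0.
    apply/negP => /eqP hk.
    have := congr1 (fun f : {ffun V -> R^o} => f y) hk.
    by rewrite /= fy_y ffunE => /eqP; rewrite oner_eq0.
  by [].
rewrite /sigma2.
apply: (@le_trans _ _ (ereal_sup [set rayleigh adj B f | f in
                   [set f : {ffun V -> R^o} | (f \in W) /\ f != 0]])).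
  by apply: ereal_inf_lbound; exists W.
apply: ge_ereal_sup => _ [f [fW f0] <-].
move: fW; rewrite /W span_cons span_seq1 => /memv_addP [u /vlineP [a ->] [v /vlineP [b ->] ef]].
rewrite ef in f0 *.
rewrite /rayleigh (comb_bnorm adj_sym q hfar) (comb_energy adj_sym q hfar).
have ha := sqr_ge0 a; have hb := sqr_ge0 b.
have hpos : 0 < a ^+ 2 * bnorm B fx + b ^+ 2 * bnorm B fy.
  have [a0|a0] := eqVneq a 0.
    have [b0|b0] := eqVneq b 0.
      by move: f0; rewrite a0 b0 !scale0r addr0 eqxx.
    have : 0 < b ^+ 2 by rewrite exprn_even_gt0 //.
    move=> hb2; nra.
  have : 0 < a ^+ 2 by rewrite exprn_even_gt0 //.
  move=> ha2; nra.
rewrite gt_eqF // lee_fin ler_pdivrMr //.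
have h1 : energy adj fx <= C * bnorm B fx.
  have hN : 0 <= bnorm B fx - 1 by rewrite subr_ge0.
  have := mulr_ge0 hC hN; rewrite mulrBr mulr1; lra.
have h2 : energy adj fy <= C * bnorm B fy.
  have hN : 0 <= bnorm B fy - 1 by rewrite subr_ge0.
  have := mulr_ge0 hC hN; rewrite mulrBr mulr1; lra.
have := ler_wpM2l ha h1; have := ler_wpM2l hb h2.
move: (energy adj fx) (energy adj fy) (bnorm B fx) (bnorm B fy) => e1 e2 n1 n2 k2 k1.
have -> : C * (a ^+ 2 * n1 + b ^+ 2 * n2) = a ^+ 2 * (C * n1) + b ^+ 2 * (C * n2) by ring.
exact: lerD.
Qed.
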